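(* Let $d\ge 8$ be an even integer and let $B$ be a bubble gadget properly attached to $S$ in a graph $G$. Let $H$ be a $(d+1)$-diverse induced subgraph of $G$ such that at least one vertex of the top row of $B$, or at least two vertices of the rightmost column of $B$, have no neighbor in $V(H)\setminus V(B)$. Then $H$ contains at most one vertex of $B$.
   Context: Two distinct vertices $u,v$ of a graph $H$ are $d$-twins in $H$ if $|(N_H(u)\setminus N_H[v])\cup(N_H(v)\setminus N_H[u])|\le d$. A graph is $(d+1)$-diverse if it has at least two vertices and no pair of $d$-twins. The $a\times b$ rook graph has vertex set $\{(i,j): i\in[a], j\in[b]\}$, two distinct vertices adjacent iff they agree in some coordinate; view it as a grid with rows and columns. A bubble gadget $B$ (for $d$) is the $w\times w$ rook graph with $w=d/2+2$, minus the two rightmost vertices of its top row (so the top row has $d/2$ vertices and the rightmost column has $d/2+1$ vertices). If $B$ is an induced subgraph of $G$ and $S$ is the set of vertices outside $V(B)$ with a neighbor in $V(B)$, then $B$ is properly attached to $S$ in $G$ if every vertex of the top row and of the rightmost column of $B$ has one or two neighbors in $V(G)\setminus V(B)$, while every other vertex of $B$ has no neighbor outside $V(B)$. *)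

(* Defs.v *)
From mathcomp Require Import all_boot.
Set Implicit Arguments. Unset Strict Implicit. Unset Printing Implicit Defensive.

Definition simple_graph (T : finType) (g : rel T) := symmetric g /\ irreflexive g.

Section Graphs.
Variables (T : finType) (g : rel T).

Definition nbh (X : {set T}) (u : T) : {set T} := [set v in X | g u v].
Definition cnbh (X : {set T}) (u : T) : {set T} := u |: nbh X u.

Definition twins (d : nat) (X : {set T}) (u v : T) : bool :=
  [&& u \in X, v \in X, u != v &
      #|(nbh X u :\: cnbh X v) :|: (nbh X v :\: cnbh X u)| <= d].

Definition diverse_plus1 (d : nat) (X : {set T}) : Prop :=
  2 <= #|X| /\ forall u v, ~~ twins d X u v.
End Graphs.

(* Bubble gadget for d: the w x w rook graph, w = d/2 + 2, minus the two
   rightmost vertices of the top row. Coordinates (row, column), row 0 = top,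
   column w-1 = rightmost. *)
Definition bw (d : nat) : nat := d./2 + 2.

Definition bubble_vertex (d : nat) (p : 'I_(bw d) * 'I_(bw d)) : bool :=
  ~~ (((p.1 : nat) == 0) && (bw d - 2 <= p.2)).

Definition top_row (d : nat) (p : 'I_(bw d) * 'I_(bw d)) : bool :=
  bubble_vertex p && ((p.1 : nat) == 0).

Definition right_col (d : nat) (p : 'I_(bw d) * 'I_(bw d)) : bool :=
  bubble_vertex p && ((p.2 : nat) == bw d - 1).

Definition rook_adj (n : nat) (p q : 'I_n * 'I_n) : bool :=
  (p != q) && ((p.1 == q.1) || (p.2 == q.2)).

Section Bubble.
Variables (T : finType) (g : rel T) (d : nat) (f : 'I_(bw d) * 'I_(bw d) -> T).

Definition is_induced_bubble : Prop :=
  (forall p q, bubble_vertex p -> bubble_vertex q -> f p = f q -> p = q) /\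
  (forall p q, bubble_vertex p -> bubble_vertex q -> g (f p) (f q) = rook_adj p q).

Definition VB : {set T} := [set f p | p in [pred p | bubble_vertex p]].

Definition properly_attached (S : {set T}) : Prop :=
  S = [set x | (x \notin VB) && [exists y in VB, g x y]] /\
  forall p, bubble_vertex p ->
    let out := #|[set x | (x \notin VB) && g (f p) x]| in
    if top_row p || right_col p then (1 <= out <= 2) else out == 0.

Definition no_outer_nbr (X : {set T}) (p : 'I_(bw d) * 'I_(bw d)) : bool :=
  [set x in X :\: VB | g (f p) x] == set0.
End Bubble.

(* Main.v *)
Require Import Defs.
From mathcomp Require Import all_boot.
From mathcomp Require Import zify.
Set Implicit Arguments. Unset Strict Implicit. Unset Printing Implicit Defensive.

Section Proof.
Variables (T : finType) (g : rel T) (d : nat)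
  (f : 'I_(bw d) * 'I_(bw d) -> T) (S H : {set T}).
Hypothesis Hsg : simple_graph g.
Hypothesis Hind : is_induced_bubble g f.
Hypothesis Hatt : properly_attached g f S.
Hypothesis Hdiv : diverse_plus1 g d H.

Local Notation n := (bw d).
Local Notation cell := ('I_n * 'I_n)%type.

Definition inX (p : cell) := bubble_vertex p && (f p \in H).
Definition O (p : cell) := [set x in H :\: VB f | g (f p) x].
Definition rowI (r : 'I_n) := [set c | inX (r, c)].
Definition colI (c : 'I_n) := [set r | inX (r, c)].

Lemma O_le2 p : bubble_vertex p -> #|O p| <= 2.
Proof.
move=> Hp; case: Hatt => _ /(_ p Hp) /=.
have sub : O p \subset [set x | (x \notin VB f) && g (f p) x].
  by apply/subsetP=> x; rewrite !inE => /andP[/andP[-> _] ->].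
have := subset_leq_card sub.
by case: ifP => _ ; [move=> h /andP[_ h2]; apply: leq_trans h h2 | move=> h /eqP h2; rewrite h2 in h; apply: leq_trans h _].
Qed.

Lemma O_nb p : bubble_vertex p -> ((p.1 : nat) != 0) -> ((p.2 : nat) != n - 1) -> #|O p| = 0.
Proof.
move=> Hp H1 H2; case: Hatt => _ /(_ p Hp) /=.
have sub : O p \subset [set x | (x \notin VB f) && g (f p) x].
  by apply/subsetP=> x; rewrite !inE => /andP[/andP[-> _] ->].
have := subset_leq_card sub.
rewrite /top_row /right_col Hp /= (negbTE H1) (negbTE H2) /=.
by move=> h /eqP h2; rewrite h2 in h; apply/eqP; rewrite -leqn0.
Qed.

Lemma inX_bub p : inX p -> bubble_vertex p.
Proof. by case/andP. Qed.

Lemma finj p q : inX p -> inX q -> f p = f q -> p = q.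
Proof. by case: Hind => hi _ /andP[hp _] /andP[hq _]; apply: hi. Qed.

Lemma fadj p q : inX p -> inX q -> g (f p) (f q) = rook_adj p q.
Proof. by case: Hind => _ ha /andP[hp _] /andP[hq _]; apply: ha. Qed.

Lemma side u v (A : {set cell}) :
  inX u -> inX v -> u != v ->
  (forall q, inX q -> q != u -> q != v -> rook_adj u q != rook_adj v q -> q \in A) ->
  nbh g H (f u) :\: cnbh g H (f v) \subset f @: A :|: O u.
Proof.
move=> Xu Xv uv HA; apply/subsetP => x; rewrite !inE negb_or => /andP[/andP[xv nx] /andP[xH gux]].
rewrite xH gux andbT /=.
case: (boolP (x \in VB f)) => xVB; last by rewrite orbT.
case/imsetP: xVB => q; rewrite inE => bq Ex; subst x.
have Xq : inX q by rewrite /inX bq xH.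
apply/orP; left; apply/imsetP; exists q => //; apply: HA => //.
- apply/eqP=> E; subst q; case: Hsg => _ irr; by rewrite irr in gux.
- by apply: contra xv => /eqP ->.
- by rewrite -!fadj // gux; move: nx; rewrite xH /= => /negbTE ->.
Qed.

Lemma tw u v (A : {set cell}) :
  inX u -> inX v -> u != v ->
  (forall q, inX q -> q != u -> q != v -> rook_adj u q != rook_adj v q -> q \in A) ->
  d < #|A| + #|O u| + #|O v|.
Proof.
move=> Xu Xv uv HA; case: Hdiv => _ /(_ (f u) (f v)).
rewrite /twins; have -> : f u \in H by case/andP: Xu.
have -> : f v \in H by case/andP: Xv.
have -> : f u != f v by apply: contra uv => /eqP E; apply/eqP; apply: finj.
rewrite /= -ltnNge => lt; apply: (leq_trans lt).
have s1 := side Xu Xv uv HA.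
have s2 : nbh g H (f v) :\: cnbh g H (f u) \subset f @: A :|: O v.
  apply: side => //; first by rewrite eq_sym.
  by move=> q a b c e; apply: HA => //; rewrite eq_sym.
have : (nbh g H (f u) :\: cnbh g H (f v)) :|: (nbh g H (f v) :\: cnbh g H (f u)) \subset (f @: A :|: O u) :|: (f @: A :|: O v).
  by apply: setUSS.
move/subset_leq_card => h; apply: (leq_trans h).
have -> : (f @: A :|: O u) :|: (f @: A :|: O v) = f @: A :|: (O u :|: O v).
  by rewrite setUACA setUid.
apply: (leq_trans (leq_card_setU _ _)).
rewrite -addnA leq_add ?leq_imset_card //.
exact: leq_card_setU.
Qed.


Lemma card_line (h : 'I_n -> cell) (A : {set 'I_n}) u :
  u \in h @: A -> #|h @: A :\ u| + 1 <= #|A|.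
Proof.
move=> uA; have := leq_imset_card h A; rewrite (cardsD1 u (h @: A)) uA.
by rewrite addnC.
Qed.

Lemma row_pair u v : inX u -> inX v -> u.1 = v.1 -> u != v ->
  d + 3 <= #|colI u.2| + #|colI v.2| + #|O u| + #|O v|.
Proof.
case: u => u1 u2; case: v => v1 v2 /= Xu Xv E uv; subst v1.
pose A := ((fun r => (r, u2)) @: colI u2 :\ (u1, u2)) :|: ((fun r => (r, v2)) @: colI v2 :\ (u1, v2)).
have hu : (u1, u2) \in (fun r => (r, u2)) @: colI u2.
  by apply/imsetP; exists u1; rewrite ?inE.
have hv : (u1, v2) \in (fun r => (r, v2)) @: colI v2.
  by apply/imsetP; exists u1; rewrite ?inE.
have c1 := card_line hu; have c2 := card_line hv.
have cA : #|A| <= #|(fun r => (r, u2)) @: colI u2 :\ (u1, u2)| + #|(fun r => (r, v2)) @: colI v2 :\ (u1, v2)|.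
  exact: leq_card_setU.
have HA : forall q, inX q -> q != (u1, u2) -> q != (u1, v2) -> rook_adj (u1, u2) q != rook_adj (u1, v2) q -> q \in A.
  move=> -[q1 q2] Xq qu qv; have qu' : (u1, u2) != (q1, q2) by rewrite eq_sym.
  have qv' : (u1, v2) != (q1, q2) by rewrite eq_sym.
  rewrite /rook_adj /= qu' qv' /=.
  case: (eqVneq u1 q1) => [<- | ne] /=; first by [].
  rewrite [v2 == _]eq_sym [u2 == _]eq_sym.
  case: (eqVneq q2 u2) qu Xq => [-> | ne2] qu Xq /=.
    by move=> _; rewrite !inE qu /=; apply/orP; left; apply/imsetP; exists q1; rewrite ?inE.
  case: (eqVneq q2 v2) qv Xq => [-> | ne3] qv Xq //= _.
  by rewrite !inE qv /=; apply/orP; right; apply/imsetP; exists q1; rewrite ?inE.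
have h := tw Xu Xv uv HA; clearbody A.
move: h cA c1 c2; set K1 := #|A|; set K2 := #|_ :\ (u1, u2)|; set K3 := #|_ :\ (u1, v2)|.
set K4 := #|colI u2|; set K5 := #|colI v2|; set K6 := #|O (u1, u2)|; set K7 := #|O (u1, v2)|.
clearbody K1 K2 K3 K4 K5 K6 K7; lia.
Qed.

Lemma col_pair u v : inX u -> inX v -> u.2 = v.2 -> u != v ->
  d + 3 <= #|rowI u.1| + #|rowI v.1| + #|O u| + #|O v|.
Proof.
case: u => u1 u2; case: v => v1 v2 /= Xu Xv E uv; subst v2.
pose A := ((fun c => (u1, c)) @: rowI u1 :\ (u1, u2)) :|: ((fun c => (v1, c)) @: rowI v1 :\ (v1, u2)).
have hu : (u1, u2) \in (fun c => (u1, c)) @: rowI u1.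
  by apply/imsetP; exists u2; rewrite ?inE.
have hv : (v1, u2) \in (fun c => (v1, c)) @: rowI v1.
  by apply/imsetP; exists u2; rewrite ?inE.
have c1 := card_line hu; have c2 := card_line hv.
have cA : #|A| <= #|(fun c => (u1, c)) @: rowI u1 :\ (u1, u2)| + #|(fun c => (v1, c)) @: rowI v1 :\ (v1, u2)|.
  exact: leq_card_setU.
have HA : forall q, inX q -> q != (u1, u2) -> q != (v1, u2) -> rook_adj (u1, u2) q != rook_adj (v1, u2) q -> q \in A.
  move=> -[q1 q2] Xq qu qv; have qu' : (u1, u2) != (q1, q2) by rewrite eq_sym.
  have qv' : (v1, u2) != (q1, q2) by rewrite eq_sym.
  rewrite /rook_adj /= qu' qv' /=.
  case: (eqVneq u2 q2) => [<- | ne]; first by rewrite !orbT.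
  rewrite !orbF [v1 == _]eq_sym [u1 == _]eq_sym.
  case: (eqVneq q1 u1) qu Xq => [-> | ne2] qu Xq /=.
    by move=> _; rewrite !inE qu /=; apply/orP; left; apply/imsetP; exists q2; rewrite ?inE.
  case: (eqVneq q1 v1) qv Xq => [-> | ne3] qv Xq //= _.
  by rewrite !inE qv /=; apply/orP; right; apply/imsetP; exists q2; rewrite ?inE.
have h := tw Xu Xv uv HA; clearbody A.
move: h cA c1 c2; set K1 := #|A|; set K2 := #|_ :\ (u1, u2)|; set K3 := #|_ :\ (v1, u2)|.
set K4 := #|rowI u1|; set K5 := #|rowI v1|; set K6 := #|O (u1, u2)|; set K7 := #|O (v1, u2)|.
clearbody K1 K2 K3 K4 K5 K6 K7; lia.
Qed.

Lemma gen_pair u v : inX u -> inX v -> u != v ->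
  d + 5 <= #|rowI u.1| + #|colI u.2| + #|rowI v.1| + #|colI v.2| + #|O u| + #|O v|.
Proof.
case: u => u1 u2; case: v => v1 v2 /= Xu Xv uv.
pose Ru := (fun c => (u1, c)) @: rowI u1. pose Cu := (fun r => (r, u2)) @: colI u2.
pose Rv := (fun c => (v1, c)) @: rowI v1. pose Cv := (fun r => (r, v2)) @: colI v2.
pose A := (Ru :\ (u1, u2)) :|: (Cu :\ (u1, u2)) :|: (Rv :\ (v1, v2)) :|: (Cv :\ (v1, v2)).
have h1 : (u1, u2) \in Ru by apply/imsetP; exists u2; rewrite ?inE.
have h2 : (u1, u2) \in Cu by apply/imsetP; exists u1; rewrite ?inE.
have h3 : (v1, v2) \in Rv by apply/imsetP; exists v2; rewrite ?inE.
have h4 : (v1, v2) \in Cv by apply/imsetP; exists v1; rewrite ?inE.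
have c1 := card_line h1; have c2 := card_line h2; have c3 := card_line h3; have c4 := card_line h4.
have cA : #|A| <= #|Ru :\ (u1, u2)| + #|Cu :\ (u1, u2)| + #|Rv :\ (v1, v2)| + #|Cv :\ (v1, v2)|.
  apply: (leq_trans (leq_card_setU _ _)); rewrite leq_add2r.
  apply: (leq_trans (leq_card_setU _ _)); rewrite leq_add2r.
  exact: leq_card_setU.
have HA : forall q, inX q -> q != (u1, u2) -> q != (v1, v2) -> rook_adj (u1, u2) q != rook_adj (v1, v2) q -> q \in A.
  move=> -[q1 q2] Xq qu qv; have qu' : (u1, u2) != (q1, q2) by rewrite eq_sym.
  have qv' : (v1, v2) != (q1, q2) by rewrite eq_sym.
  have iRu c : inX (u1, c) -> (u1, c) \in Ru by move=> Xc; apply/imsetP; exists c; rewrite ?inE.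
  have iCu r : inX (r, u2) -> (r, u2) \in Cu by move=> Xc; apply/imsetP; exists r; rewrite ?inE.
  have iRv c : inX (v1, c) -> (v1, c) \in Rv by move=> Xc; apply/imsetP; exists c; rewrite ?inE.
  have iCv r : inX (r, v2) -> (r, v2) \in Cv by move=> Xc; apply/imsetP; exists r; rewrite ?inE.
  rewrite /rook_adj /= qu' qv' /= !inE qu qv /=.
  case: (eqVneq u1 q1) Xq => [<- | n1] Xq /=.
    by move=> _; rewrite iRu.
  case: (eqVneq u2 q2) Xq => [<- | n2] Xq /=.
    by move=> _; rewrite iCu ?orbT.
  case: (eqVneq v1 q1) Xq => [<- | n3] Xq /=.
    by move=> _; rewrite iRv ?orbT.
  case: (eqVneq v2 q2) Xq => [<- | n4] Xq //= _.
  by rewrite iCv ?orbT.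
have h := tw Xu Xv uv HA; clearbody A.
move: h cA c1 c2 c3 c4; set K1 := #|A|; set K2 := #|Ru :\ (u1, u2)|; set K3 := #|Cu :\ (u1, u2)|.
set K8 := #|Rv :\ (v1, v2)|; set K9 := #|Cv :\ (v1, v2)|.
set K4 := #|rowI u1|; set K5 := #|rowI v1|; set K6 := #|O (u1, u2)|; set K7 := #|O (v1, v2)|.
set K10 := #|colI u2|; set K11 := #|colI v2|.
clearbody K1 K2 K3 K4 K5 K6 K7 K8 K9 K10 K11; lia.
Qed.

Ltac gencards := repeat match goal with
 | H : context [#|?A|] |- _ => let x := fresh "K" in set x := #|A| in *; clearbody x
 | |- context [#|?A|] => let x := fresh "K" in set x := #|A| in *; clearbody x end.

Lemma card_n (A : {set 'I_n}) : #|A| <= n.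
Proof. by rewrite -[X in _ <= X]card_ord max_card. Qed.

Lemma miss1 (A : {set 'I_n}) a : a \notin A -> #|A| <= n.-1.
Proof.
move=> aA; have : A \subset [set~ a] by apply/subsetP => x xA; rewrite !inE; apply: contra aA => /eqP <-.
by move/subset_leq_card; rewrite cardsC1 card_ord.
Qed.

Lemma miss2 (A : {set 'I_n}) a b : a != b -> a \notin A -> b \notin A -> #|A| <= n.-2.
Proof.
move=> ab aA bA.
have : A \subset [set~ a] :\ b.
  by apply/subsetP => x xA; rewrite !inE; apply/andP; split; [apply: contra bA => /eqP <- | apply: contra aA => /eqP <-].
move/subset_leq_card; have := cardsD1 b [set~ a]; rewrite cardsC1 card_ord !inE eq_sym ab /=.
move=> E; move: E (card_n A); gencards; lia.
Qed.

Lemma full (A : {set 'I_n}) a : n <= #|A| -> a \in A.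
Proof.
move=> h; apply/negPn/negP => /miss1 h2.
have : 0 < n by rewrite /bw addn2.
move: h h2; gencards; lia.
Qed.

Lemma two (A : {set 'I_n}) a : 3 <= #|A| -> exists x y, [/\ x \in A, y \in A, x != a, y != a & x != y].
Proof.
move=> h; have : 1 < #|A :\ a| by have := cardsD1 a A; move: h; gencards; case: (a \in A) => /=; lia.
case/card_gt1P => x [y [xA yA xy]]; move: xA yA; rewrite !inE => /andP[xa xA] /andP[ya yA].
by exists x, y.
Qed.

Hypothesis Hd8 : 8 <= d.
Hypothesis Hev : ~~ odd d.

Lemma dE : d = d./2 + d./2.
Proof. by have := odd_double_half d; rewrite (negbTE Hev) add0n -addnn => ->. Qed.
Lemma nE : n = d./2 + 2.
Proof. by []. Qed.
Lemma k4 : 4 <= d./2.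
Proof. by have := dE; lia. Qed.

Lemma bub0 (r c : 'I_n) : inX (r, c) -> (r : nat) = 0 -> (c : nat) < d./2.
Proof.
case/andP; rewrite /bubble_vertex /= => /negP h _ r0; rewrite ltnNge; apply/negP => hc.
by apply: h; rewrite r0 eqxx /= {1}/bw addnK.
Qed.

Lemma Onb (r c : 'I_n) : inX (r, c) -> (r : nat) != 0 -> (c : nat) != n - 1 -> #|O (r, c)| = 0.
Proof. by move=> /inX_bub b h1 h2; apply: O_nb. Qed.

Lemma Ole (r c : 'I_n) : inX (r, c) -> #|O (r, c)| <= 2.
Proof. by move=> /inX_bub b; apply: O_le2. Qed.

Ltac gencardsG := repeat match goal with
 | |- context [#|?A|] => let x := fresh "K" in set x := #|A|; clearbody x end.
Ltac arith := have := nE; have := dE; have := k4; gencardsG; intros;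
  match goal with |- is_true _ => idtac | |- _ = _ => idtac | |- _ /\ _ => idtac | |- _ => exfalso end; lia.

Ltac arithc := have := nE; have := dE; have := k4; gencardsG;
  repeat match goal with H : _ |- _ => clear H end; intros;
  match goal with |- is_true _ => idtac | |- _ = _ => idtac | |- _ /\ _ => idtac | |- _ => exfalso end; lia.

Definition FR := exists r : 'I_n, (r : nat) != 0 /\ forall c, inX (r, c).

Lemma CC (r1 r2 c : 'I_n) : r1 != r2 -> (r1 : nat) != 0 -> (r2 : nat) != 0 -> (c : nat) != n - 1 ->
  inX (r1, c) -> inX (r2, c) -> FR.
Proof.
move=> r12 h1 h2 hc X1 X2.
have ne : (r1, c) != (r2, c) by apply: contra r12 => /eqP [->].
have := col_pair X1 X2 erefl ne; rewrite /= (Onb X1) // (Onb X2) // !addn0.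
have a1 := card_n (rowI r1); have a2 := card_n (rowI r2).
case: (leqP n #|rowI r1|) => f1.
  by move=> _; exists r1; split=> // c'; have := full c' f1; rewrite inE.
case: (leqP n #|rowI r2|) => f2.
  by move=> _; exists r2; split=> // c'; have := full c' f2; rewrite inE.
move: f1 f2 a1 a2; arith.
Qed.

Definition ord_of (i : nat) (h : i < n) : 'I_n := Ordinal h.

Lemma RR (r c1 c2 : 'I_n) : c1 != c2 -> (r : nat) != 0 -> (c1 : nat) != n - 1 -> (c2 : nat) != n - 1 ->
  inX (r, c1) -> inX (r, c2) -> FR.
Proof.
move=> c12 hr h1 h2 X1 X2.
have ne : (r, c1) != (r, c2) by apply: contra c12 => /eqP [->].
have := row_pair X1 X2 erefl ne; rewrite /= (Onb X1) // (Onb X2) // !addn0.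
have a1 := card_n (colI c1); have a2 := card_n (colI c2).
have l1 : 1 < n by arith.
have l2 : 2 < n by arith.
have fin : forall c : 'I_n, (c : nat) != n - 1 -> n <= #|colI c| -> FR.
  move=> c hc fc; apply: (@CC (ord_of l1) (ord_of l2) c) => //.
  - by move: (full (ord_of l1) fc); rewrite in_set => ->.
  - by move: (full (ord_of l2) fc); rewrite in_set => ->.
case: (leqP n #|colI c1|) => f1; first by move=> _; apply: (fin c1).
case: (leqP n #|colI c2|) => f2; first by move=> _; apply: (fin c2).
move: f1 f2 a1 a2; arith.
Qed.

Lemma ltn1 : n - 1 < n. Proof. by arith. Qed.
Lemma ltn0 : 0 < n. Proof. by arith. Qed.
Lemma ltn2 : n - 2 < n. Proof. by arith. Qed.

Lemma FRrowL (r : 'I_n) : (r : nat) != 0 -> 3 <= #|rowI r| -> FR.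
Proof.
move=> hr h; have [x [y [xA yA xa ya xy]]] := two (ord_of ltn1) h.
have nv (z : 'I_n) : z != ord_of ltn1 -> (z : nat) != n - 1.
  by move=> zz; apply: contra zz => /eqP e; apply/eqP; apply: val_inj.
by move: xA yA; rewrite !inE; apply: (RR xy hr (nv _ xa) (nv _ ya)).
Qed.

Lemma FRcolL (c : 'I_n) : (c : nat) != n - 1 -> 3 <= #|colI c| -> FR.
Proof.
move=> hc h; have [x [y [xA yA xa ya xy]]] := two (ord_of ltn0) h.
have nv (z : 'I_n) : z != ord_of ltn0 -> (z : nat) != 0.
  by move=> zz; apply: contra zz => /eqP e; apply/eqP; apply: val_inj.
by move: xA yA; rewrite !inE; apply: (CC xy (nv _ xa) (nv _ ya) hc).
Qed.

Lemma FRrow (r : 'I_n) : 3 <= #|rowI r| -> FR.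
Proof.
move=> h; case: (eqVneq (r : nat) 0) => hr; last exact: (FRrowL hr h).
have [x [y [xA yA _ _ xy]]] := two r h.
move: xA yA; rewrite !inE => X1 X2.
have ne : (r, x) != (r, y) by apply: contra xy => /eqP [->].
have := row_pair X1 X2 erefl ne; rewrite /=.
have o1 := Ole X1; have o2 := Ole X2.
have b1 := bub0 X1 hr; have b2 := bub0 X2 hr.
have nx : (x : nat) != n - 1 by move: b1; arith.
have ny : (y : nat) != n - 1 by move: b2; arith.
case: (leqP 3 #|colI x|) => f1; first by move=> _; apply: FRcolL nx f1.
case: (leqP 3 #|colI y|) => f2; first by move=> _; apply: FRcolL ny f2.
by move: o1 o2 f1 f2; arith.
Qed.

Lemma FRcol (c : 'I_n) : 3 <= #|colI c| -> FR.
Proof.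
move=> h; case: (eqVneq (c : nat) (n - 1)) => hc; last exact: (FRcolL hc h).
have [x [y [xA yA _ _ xy]]] := two c h.
move: xA yA; rewrite !inE => X1 X2.
have ne : (x, c) != (y, c) by apply: contra xy => /eqP [->].
have := col_pair X1 X2 erefl ne; rewrite /=.
have o1 := Ole X1; have o2 := Ole X2.
have nz (z : 'I_n) : inX (z, c) -> (z : nat) != 0.
  move=> Xz; apply/eqP => z0; have := bub0 Xz z0; rewrite hc; arith.
case: (leqP 3 #|rowI x|) => f1; first by move=> _; apply: FRrowL (nz _ X1) f1.
case: (leqP 3 #|rowI y|) => f2; first by move=> _; apply: FRrowL (nz _ X2) f2.
by move: o1 o2 f1 f2; arith.
Qed.

Lemma FRpair u v : inX u -> inX v -> u != v -> FR.
Proof.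
case: u => u1 u2; case: v => v1 v2 X1 X2 uv.
have := gen_pair X1 X2 uv; rewrite /=.
have o1 := Ole X1; have o2 := Ole X2.
case: (leqP 3 #|rowI u1|) => f1; first by move=> _; apply: FRrow f1.
case: (leqP 3 #|colI u2|) => f2; first by move=> _; apply: FRcol f2.
case: (leqP 3 #|rowI v1|) => f3; first by move=> _; apply: FRrow f3.
case: (leqP 3 #|colI v2|) => f4; first by move=> _; apply: FRcol f4.
by move: o1 o2 f1 f2 f3 f4; arith.
Qed.

Lemma noO p : no_outer_nbr g f H p -> #|O p| = 0.
Proof. by move/eqP => e; rewrite /O e cards0. Qed.

Lemma cm_notop : ~~ inX (ord_of ltn0, ord_of ltn2).
Proof. apply/negP => X; have := bub0 X erefl; rewrite /=; arith. Qed.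

Lemma cR_notop : ~~ inX (ord_of ltn0, ord_of ltn1).
Proof. apply/negP => X; have := bub0 X erefl; rewrite /=; arith. Qed.

Lemma colcm : #|colI (ord_of ltn2)| <= n.-1.
Proof. by apply: (miss1 (a := ord_of ltn0)); rewrite inE cm_notop. Qed.

Lemma colcR : #|colI (ord_of ltn1)| <= n.-1.
Proof. by apply: (miss1 (a := ord_of ltn0)); rewrite inE cR_notop. Qed.

Lemma final : 2 <= #|H :&: VB f| ->
  ((exists p, top_row p /\ no_outer_nbr g f H p) \/
   (exists p q, p != q /\ right_col p /\ right_col q /\
                no_outer_nbr g f H p /\ no_outer_nbr g f H q)) -> False.
Proof.
move=> /card_gt1P [x [y [xV yV xy]]].
have getu z : z \in H :&: VB f -> exists u, inX u /\ f u = z.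
  rewrite inE => /andP[zH /imsetP [u]]; rewrite inE => bu ez; subst z; exists u; split=> //.
  by rewrite /inX bu zH.
have [u [Xu fu]] := getu x xV; have [v [Xv fv]] := getu y yV.
have uv : u != v by apply: contra xy => /eqP e; rewrite -fu -fv e.
have [rs [hrs frs]] := FRpair Xu Xv uv.
pose cm := ord_of ltn2.
have cmn : (cm : nat) != n - 1 by rewrite /=; arithc.
have Lp : forall c : 'I_n, (c : nat) < d./2 -> n <= #|colI c| /\ n.-1 <= #|colI cm|.
  move=> c hc.
  have X1 := frs c; have X2 := frs cm.
  have ne : (rs, c) != (rs, cm) by apply/eqP => -[] /(congr1 val) /=; move: hc; arithc.
  have hc1 : (c : nat) != n - 1 by move: hc; arithc.
  have := row_pair X1 X2 erefl ne; rewrite /= (Onb X1 hrs hc1) (Onb X2 hrs cmn).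
  have a1 := card_n (colI c); have a2 := colcm; rewrite -/cm in a2.
  move: a1 a2; arithc.
have Lfull : forall c : 'I_n, (c : nat) < d./2 -> forall r, inX (r, c).
  move=> c hc r; have [h _] := Lp c hc; by move: (full r h); rewrite in_set => ->.
have k0 : 0 < d./2 by arithc.
have Lmid : forall r : 'I_n, (r : nat) != 0 -> inX (r, cm).
  move=> r hr; apply/negPn/negP => Xr.
  have [_ h] := Lp (ord_of ltn0) k0.
  have : (ord_of ltn0) != r by apply/eqP => /(congr1 val) /= e; rewrite -e in hr.
  move/miss2 => /(_ (colI cm)); rewrite !inE cm_notop Xr => /(_ isT isT).
  by move: h; arithc.
case.
- move=> [[p1 p2] [/andP [bp /eqP p10] np]].
  have p2k : (p2 : nat) < d./2.
    move: bp; rewrite /bubble_vertex /= p10 eqxx /= -ltnNge {1}/bw addnK; done.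
  have X1 := Lfull p2 p2k p1; have X2 := frs p2.
  have ne : (p1, p2) != (rs, p2) by apply/eqP => -[] /(congr1 val) /= e; rewrite -e p10 in hrs.
  have := col_pair X1 X2 erefl ne; rewrite /= noO // (Onb X2) //; last by move: p2k; arithc.
  have a1 : #|rowI p1| <= n.-2.
    apply: (miss2 (a := cm) (b := ord_of ltn1)).
    - by apply/eqP => /(congr1 val) /=; arithc.
    - by rewrite inE; apply/negP => Xc; have := bub0 Xc p10; rewrite /=; arithc.
    - by rewrite inE; apply/negP => Xc; have := bub0 Xc p10; rewrite /=; arithc.
  have a2 := card_n (rowI rs).
  by move: a1 a2; arithc.
- move=> [[a1 b1] [[a2 b2] [pq [/andP [bp /eqP pb1] [/andP [bq /eqP pb2] [np nq]]]]]].
  have nz (a b : 'I_n) : bubble_vertex (a, b) -> (b : nat) = n - 1 -> (a : nat) != 0.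
    move=> bb e; apply/eqP => a0; move: bb; rewrite /bubble_vertex /= a0 e eqxx /=; apply/negP; arithc.
  have na1 := nz _ _ bp pb1; have na2 := nz _ _ bq pb2.
  have notX (a b : 'I_n) : (b : nat) = n - 1 -> (a : nat) != 0 -> no_outer_nbr g f H (a, b) -> ~~ inX (a, b).
    move=> e na no; apply/negP => X1.
    have X2 := Lmid a na.
    have ne : (a, b) != (a, cm) by apply/eqP => -[] /(congr1 val) /=; rewrite e; arithc.
    have := row_pair X1 X2 erefl ne; rewrite /= noO // (Onb X2) //.
    have bR : b = ord_of ltn1 by apply: val_inj; rewrite /= e.
    have := colcm; have := colcR; rewrite -bR; arithc.
  have nX1 := notX _ _ pb1 na1 np; have nX2 := notX _ _ pb2 na2 nq.
  have r1 := miss1 (A := rowI a1) (a := b1); rewrite inE nX1 in r1.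
  have r2 := miss1 (A := rowI a2) (a := b2); rewrite inE nX2 in r2.
  have a12 : a1 != a2.
    apply: contra pq => /eqP e; apply/eqP; rewrite e; congr pair; apply: val_inj; by move: pb1 pb2 => /= -> ->.
  pose c0 := ord_of ltn0.
  have X1 := Lfull c0 k0 a1; have X2 := Lfull c0 k0 a2.
  have ne : (a1, c0) != (a2, c0) by apply: contra a12 => /eqP [->].
  have := col_pair X1 X2 erefl ne; rewrite /= (Onb X1) // ?(Onb X2) //; try by rewrite /=; arithc.
  by move: (r1 isT) (r2 isT); arithc.
Qed.

End Proof.

Theorem lemma5p3 (T : finType) (g : rel T) (d : nat)
  (f : 'I_(bw d) * 'I_(bw d) -> T) (S H : {set T}) :
  simple_graph g -> 8 <= d -> ~~ odd d ->
  is_induced_bubble g f ->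
  properly_attached g f S ->
  diverse_plus1 g d H ->
  ((exists p, top_row p /\ no_outer_nbr g f H p) \/
   (exists p q, p != q /\ right_col p /\ right_col q /\
                no_outer_nbr g f H p /\ no_outer_nbr g f H q)) ->
  #|H :&: VB f| <= 1.
Proof.
move=> Hsg Hd8 Hev Hind Hatt Hdiv hyp.
rewrite leqNgt; apply/negP => h.
exact: (final Hsg Hind Hatt Hdiv Hd8 Hev h hyp).
Qed.
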